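(* Let $F,G\colon\mathbb{C}^{a+b+1}\to\mathbb{C}^{A+B+1}$ be homogeneous polynomial maps (representing rational maps $\mathbb{P}^{a+b}\dashrightarrow\mathbb{P}^{A+B}$) each taking $HQ(a,b+1)$ to $HQ(A,B+1)$ where defined. Suppose there exist $\tau\in\operatorname{Aut}(HQ(a,b+1))$ and $\chi\in\operatorname{Aut}(HQ(A,B+1))$, represented by linear maps, with $F\circ\tau=\chi\circ G$. Let $q_F,q_G$ be the corresponding quotients. Then $\operatorname{gin}(\mathcal{I}(H(q_F)))=\operatorname{gin}(\mathcal{I}(H(q_G)))$.
   Context: For $Z\in\mathbb{C}^{a+b+1}$ with coordinates $Z_0,\dots,Z_{a+b}$, $\|Z\|_{b+1}^2=-\sum_{j=0}^{b}|Z_j|^2+\sum_{j=b+1}^{a+b}|Z_j|^2$ (similarly $\|W\|_{B+1}^2$ on $\mathbb{C}^{A+B+1}$). $HQ(a,b+1)=\{Z\in\mathbb{P}^{a+b}:\|Z\|_{b+1}^2=0\}$. $\operatorname{Aut}(HQ(a,b+1))$ consists of automorphisms of $\mathbb{P}^{a+b}$ given by invertible linear maps $T$ with $\|TZ\|_{b+1}^2=\lambda\|Z\|_{b+1}^2$ for some real $\lambda\neq0$. The quotient of $F$ is the bihomogeneous polynomial $q_F(Z,\bar Z)$ with $\|F(Z)\|_{B+1}^2=\|Z\|_{b+1}^2\,q_F(Z,\bar Z)$. A holomorphic decomposition of $q$ is $q(Z,\bar Z)=\|h_+(Z)\|^2-\|h_-(Z)\|^2$ with $h_\pm$ homogeneous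 polynomial maps whose components together are linearly independent; $H(q)=\{h_+,h_-\}$, and $\mathcal{I}(H(q))$ is the ideal generated by all components of $h_+,h_-$ (independent of the choice of decomposition). Monomial order on $Z_0,\dots,Z_n$: a fixed total order with $Z_0>\dots>Z_n$, multiplicative, and with lower total degree monomials larger. For homogeneous $P$, $\operatorname{in}(P)$ is its largest monomial with nonzero coefficient; $\operatorname{in}(\mathcal{I})$ is the ideal generated by $\operatorname{in}(P)$, $P\in\mathcal{I}$; $\operatorname{gin}(\mathcal{I})=\operatorname{in}(\mathcal{I}\circ T)$ for $T$ in the dense open set of invertible linear maps on which this is constant (Galligo's theorem). *)

(* Defs.v *)
(* The field is an arbitrary numClosedFieldType R
   (algebraically closed field with conjugation, e.g. the complex numbers). *)
From HB Require Import structures.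
From mathcomp Require Import all_boot all_order all_algebra.
Set Implicit Arguments. Unset Strict Implicit. Unset Printing Implicit Defensive.
Import Order.TTheory GRing.Theory Num.Theory.
Local Open Scope ring_scope.

Section MPoly.
Variable R : numClosedFieldType.
Variable I : finType.

Definition mono := {ffun I -> nat}.
Definition mono0 : mono := [ffun _ => 0%N].
Definition monoD (m1 m2 : mono) : mono := [ffun i => (m1 i + m2 i)%N].
Definition monoX (i : I) : mono := [ffun j => nat_of_bool (j == i)].
Definition mdeg (m : mono) : nat := (\sum_i m i)%N.
Definition mdvd (m1 m2 : mono) : Prop := forall i, (m1 i <= m2 i)%N.

(* a polynomial is a finite list of terms (coefficient, monomial);
   polynomials are compared through their coefficients *)
Definition mpoly := seq (R * mono).
Definition mcoef (p : mpoly) (m : mono) : R := \sum_(t <- p | t.2 == m) t.1.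
Definition mpeq (p q : mpoly) : Prop := forall m, mcoef p m = mcoef q m.
Definition mpnz (p : mpoly) : Prop := exists m, mcoef p m != 0.
Definition mpadd (p q : mpoly) : mpoly := p ++ q.
Definition mpscale (c : R) (p : mpoly) : mpoly := [seq (c * t.1, t.2) | t <- p].
Definition mpmul (p q : mpoly) : mpoly :=
  [seq (s.1 * t.1, monoD s.2 t.2) | s <- p, t <- q].
Definition mpone : mpoly := [:: (1, mono0)].
Definition mpsum (ps : seq mpoly) : mpoly := flatten ps.
Definition mpeval (p : mpoly) (x : I -> R) : R :=
  \sum_(t <- p) t.1 * \prod_i x i ^+ t.2 i.

Definition mphom (d : nat) (p : mpoly) : Prop :=
  forall m, mcoef p m != 0 -> mdeg m = d.
Definition mphomog (p : mpoly) : Prop := exists d, mphom d p.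

Definition in_ideal_gen (gens : seq mpoly) (p : mpoly) : Prop :=
  exists cs : seq mpoly, size cs = size gens /\
    mpeq p (mpsum [seq mpmul c.1 c.2 | c <- zip cs gens]).

Definition is_init (le : mono -> mono -> Prop) (p : mpoly) (m : mono) : Prop :=
  mcoef p m != 0 /\ forall m', mcoef p m' != 0 -> le m' m.

(* monomials of the initial ideal in(J) of a (homogeneous) ideal J,
   i.e. monomials divisible by in(P) for some nonzero homogeneous P in J *)
Definition in_ideal (le : mono -> mono -> Prop) (J : mpoly -> Prop) (m : mono) : Prop :=
  exists p m0, [/\ J p, mphomog p, mpnz p, is_init le p m0 & mdvd m0 m].

Definition monomial_order (le : mono -> mono -> Prop) : Prop :=
  [/\ (forall m, le m m),
      (forall m1 m2, le m1 m2 -> le m2 m1 -> m1 = m2),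
      (forall m1 m2 m3, le m1 m2 -> le m2 m3 -> le m1 m3),
      (forall m1 m2, le m1 m2 \/ le m2 m1) &
      (forall m1 m2 m, le m1 m2 -> le (monoD m1 m) (monoD m2 m)) ] /\
  (forall m1 m2, (mdeg m1 < mdeg m2)%N -> le m2 m1 /\ m1 <> m2).

End MPoly.

Arguments mono0 {I}.

Definition vars_ordered (n : nat) (le : mono 'I_n -> mono 'I_n -> Prop) : Prop :=
  forall i j : 'I_n, (i < j)%N -> le (monoX j) (monoX i) /\ monoX j <> monoX i.

Section Subst.
Variable R : numClosedFieldType.
Variable n : nat.

Definition lin_form (T : 'M[R]_n) (i : 'I_n) : mpoly R 'I_n :=
  [seq (T i j, monoX j) | j <- enum 'I_n].
Definition mpexp (p : mpoly R 'I_n) (k : nat) : mpoly R 'I_n :=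
  iter k (mpmul p) (mpone R 'I_n).
Definition subst_mono (T : 'M[R]_n) (m : mono 'I_n) : mpoly R 'I_n :=
  foldr (@mpmul R 'I_n) (mpone R 'I_n) [seq mpexp (lin_form T i) (m i) | i <- enum 'I_n].
(* (P o T)(Z) = P(T Z) *)
Definition subst (p : mpoly R 'I_n) (T : 'M[R]_n) : mpoly R 'I_n :=
  mpsum [seq mpscale t.1 (subst_mono T t.2) | t <- p].

Definition ideal_comp (J : mpoly R 'I_n -> Prop) (T : 'M[R]_n) (q : mpoly R 'I_n) : Prop :=
  exists p, J p /\ mpeq q (subst p T).

(* M = gin(J): there is a nonempty Zariski open set {det T <> 0, D(T) <> 0}
   of invertible linear maps on which in(J o T) equals M *)
Definition is_gin (le : mono 'I_n -> mono 'I_n -> Prop) (J : mpoly R 'I_n -> Prop)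
    (M : mono 'I_n -> Prop) : Prop :=
  exists D : mpoly R ('I_n * 'I_n)%type, mpnz D /\
    forall T : 'M[R]_n, \det T != 0 -> mpeval D (fun ij => T ij.1 ij.2) != 0 ->
      forall m, @in_ideal R _ le (ideal_comp J T) m <-> M m.

Definition mxapp (T : 'M[R]_n) (Z : 'I_n -> R) : 'I_n -> R :=
  fun i => \sum_j T i j * Z j.
End Subst.

Definition hnorm (R : numClosedFieldType) (b n : nat) (Z : 'I_n -> R) : R :=
  \sum_(i < n) (if (i <= b)%N then -1 else 1) * (Z i * (Z i)^*).

Section Maps.
Variable R : numClosedFieldType.
Variables (a b A B : nat).
Local Notation n := (a + b + 1)%N.
Local Notation N := (A + B + 1)%N.

Definition mapeval (F : 'I_N -> mpoly R 'I_n) (Z : 'I_n -> R) : 'I_N -> R :=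
  fun i => mpeval (F i) Z.

Definition hom_map (F : 'I_N -> mpoly R 'I_n) : Prop :=
  (exists d, forall i, mphom d (F i)) /\ (exists i, mpnz (F i)).

Definition maps_HQ (F : 'I_N -> mpoly R 'I_n) : Prop :=
  forall Z : 'I_n -> R, hnorm b Z = 0 -> (exists i, mapeval F Z i != 0) ->
    hnorm B (mapeval F Z) = 0.

Definition isAutHQ (c k : nat) (T : 'M[R]_k) : Prop :=
  T \in unitmx /\ exists lam : R, [/\ lam \is Num.real, lam != 0 &
    forall Z, hnorm c (mxapp T Z) = lam * hnorm c Z].

(* hp, hm are the component lists of a holomorphic decomposition of the
   quotient q_F : ||F(Z)||^2 = ||Z||^2 q_F(Z,Zbar), q_F = ||hp||^2 - ||hm||^2 *)
Definition holo_decomp_quot (F : 'I_N -> mpoly R 'I_n) (hp hm : seq (mpoly R 'I_n)) : Prop :=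
  [/\ (exists d, forall h, h \in hp ++ hm -> mphom d h),
      (forall cs : seq R, size cs = size (hp ++ hm) ->
         mpeq (mpsum [seq mpscale c.1 c.2 | c <- zip cs (hp ++ hm)]) [::] ->
         all (fun c => c == 0) cs) &
      forall Z : 'I_n -> R,
        hnorm B (mapeval F Z) =
        hnorm b Z * (\sum_(h <- hp) mpeval h Z * (mpeval h Z)^*
                     - \sum_(h <- hm) mpeval h Z * (mpeval h Z)^*) ].
End Maps.

Arguments maps_HQ {R a} b {A} B F.
Arguments holo_decomp_quot {R a} b {A} B F hp hm.
Arguments isAutHQ {R} c {k} T.
Arguments hom_map {R a b A B} F.
Arguments mapeval {R a b A B} F Z _.

(* Main.v *)
Require Import Defs.
From HB Require Import structures.
From mathcomp Require Import all_boot all_order all_algebra.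
From mathcomp Require Import fingroup perm zify ring lra.
From Stdlib Require Import Classical FunctionalExtensionality IndefiniteDescription.
Set Implicit Arguments. Unset Strict Implicit. Unset Printing Implicit Defensive.
Import Order.TTheory GRing.Theory Num.Theory.
Local Open Scope ring_scope.
Section Basic.
Variable R : numClosedFieldType.
Variable I : finType.
Implicit Types (p q : mpoly R I) (x : I -> R) (m : mono I).

Definition mmon x m : R := \prod_i x i ^+ m i.

Lemma mpevalE p x : mpeval p x = \sum_(t <- p) t.1 * mmon x t.2.
Proof. by []. Qed.

Lemma mpeval_cat p q x : mpeval (p ++ q) x = mpeval p x + mpeval q x.
Proof. by rewrite /mpeval big_cat. Qed.

Lemma mpeval_nil x : mpeval [::] x = 0.
Proof. by rewrite /mpeval big_nil. Qed.

Lemma mpeval_scale c p x : mpeval (mpscale c p) x = c * mpeval p x.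
Proof.
rewrite /mpeval /mpscale big_map mulr_sumr; apply: eq_bigr => t _ /=.
by rewrite mulrA.
Qed.

Lemma mmonD x m1 m2 : mmon x (monoD m1 m2) = mmon x m1 * mmon x m2.
Proof.
rewrite /mmon -big_split /=; apply: eq_bigr => i _.
by rewrite /monoD ffunE exprD.
Qed.

Lemma mmon0 x : mmon x mono0 = 1.
Proof. by rewrite /mmon big1 // => i _; rewrite /mono0 ffunE expr0. Qed.

Lemma mmonX x j : mmon x (monoX j) = x j.
Proof.
rewrite /mmon (bigD1 j) //= big1 ?mulr1; first by rewrite /monoX ffunE eqxx expr1.
by move=> i /negbTE Hi; rewrite /monoX ffunE Hi expr0.
Qed.

Lemma mpeval_mul p q x : mpeval (mpmul p q) x = mpeval p x * mpeval q x.
Proof.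
rewrite /mpeval /mpmul big_allpairs_dep /= mulr_suml; apply: eq_bigr => s _.
rewrite mulr_sumr; apply: eq_bigr => t _ /=.
rewrite -/(mmon x (monoD s.2 t.2)) mmonD /mmon; ring.
Qed.

Lemma mpeval_one x : mpeval (mpone R I) x = 1.
Proof. by rewrite mpevalE /mpone big_cons big_nil /= mmon0 mulr1 addr0. Qed.

Lemma mpeval_sum (ps : seq (mpoly R I)) x :
  mpeval (mpsum ps) x = \sum_(p <- ps) mpeval p x.
Proof. by rewrite /mpeval /mpsum big_flatten. Qed.

Lemma mpeval_const c x : mpeval [:: (c, mono0)] x = c.
Proof. by rewrite mpevalE big_cons big_nil /= mmon0 mulr1 addr0. Qed.

Lemma mpeval_var j x : mpeval [:: (1, monoX j)] x = x j.
Proof. by rewrite mpevalE big_cons big_nil /= mmonX mul1r addr0. Qed.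

Lemma regroup_gen p (s : seq (mono I)) (g : mono I -> R) :
  uniq s -> (forall t, t \in p -> t.2 \in s) ->
  \sum_(t <- p) t.1 * g t.2 = \sum_(m <- s) mcoef p m * g m.
Proof.
move=> Us; elim: p => [|t p IH] Hs.
  by rewrite big_nil big1_seq // => m _; rewrite /mcoef big_nil mul0r.
rewrite big_cons IH; last by move=> u Hu; apply: Hs; rewrite in_cons Hu orbT.
have Ht : t.2 \in s by apply: Hs; rewrite in_cons eqxx.
rewrite [RHS](eq_bigr (fun m => ((t.2 == m)%:R * t.1) * g m + mcoef p m * g m)).
  rewrite big_split /=; congr (_ + _); symmetry.
  rewrite (bigD1_seq t.2) //= eqxx mul1r big1 ?addr0 // => m /negbTE Hm.
  by rewrite eq_sym Hm mul0r mul0r.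
move=> m _; rewrite /mcoef big_cons /=.
by case: eqP => _; rewrite ?mul1r ?mul0r ?add0r // mulrDl.
Qed.

Lemma regroup p x :
  mpeval p x = \sum_(m <- undup [seq t.2 | t <- p]) mcoef p m * mmon x m.
Proof.
apply: regroup_gen; first exact: undup_uniq.
by move=> t Ht; rewrite mem_undup; apply: map_f.
Qed.

Lemma mcoef_notin p m : m \notin [seq t.2 | t <- p] -> mcoef p m = 0.
Proof.
move=> Hm; rewrite /mcoef big_seq_cond big1 // => t /andP [Ht /eqP E].
by case/negP: Hm; rewrite -E; apply: map_f.
Qed.

Lemma eval_zero_coef p : (forall m, mcoef p m = 0) -> forall x, mpeval p x = 0.
Proof. by move=> H x; rewrite regroup big1 // => m _; rewrite H mul0r. Qed.

Lemma mcoef_cat p q m : mcoef (p ++ q) m = mcoef p m + mcoef q m.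
Proof. by rewrite /mcoef big_cat. Qed.

Lemma mcoef_scale c p m : mcoef (mpscale c p) m = c * mcoef p m.
Proof. by rewrite /mcoef /mpscale big_map mulr_sumr. Qed.

End Basic.
Section Digits.
Definition dsum (K N : nat) (f : 'I_N -> nat) : nat := (\sum_(j < N) f j * K ^ j)%N.

Lemma dsum_lt K N (f : 'I_N -> nat) : (forall j, f j < K)%N -> (dsum K f < K ^ N)%N.
Proof.
elim: N f => [|N IH] f Hf; first by rewrite /dsum big_ord0 expn0.
rewrite /dsum big_ord_recr /=.
have := IH (fun j => f (widen_ord (leqnSn N) j)) (fun j => Hf _).
rewrite /dsum => H1; have H2 := Hf ord_max.
rewrite expnS.
have : (f ord_max * K ^ N + K ^ N <= K * K ^ N)%N.
  move: H2; set X := (K ^ N)%N; nia.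
move: H1; set a := (\sum_(i < N) _)%N; set b := (f ord_max * K ^ N)%N.
by move=> H1 H3; apply: leq_trans H3; rewrite addnC ltn_add2l.
Qed.

Lemma dsum_inj K N (f g : 'I_N -> nat) : (forall j, f j < K)%N -> (forall j, g j < K)%N ->
  dsum K f = dsum K g -> f =1 g.
Proof.
elim: N f g => [|N IH] f g Hf Hg E j; first by case: j.
move: E; rewrite /dsum !big_ord_recr /=.
have L1 := dsum_lt (fun j => Hf (widen_ord (leqnSn N) j)).
have L2 := dsum_lt (fun j => Hg (widen_ord (leqnSn N) j)).
move: L1 L2; rewrite /dsum.
set a := (\sum_(i < N) _)%N; set b := (\sum_(i < N) _)%N => L1 L2 E.
have Eab : a = b.
  have := congr1 (fun z => z %% K ^ N)%N E => /=.
  by rewrite ![(_ + f _ * _)%N]addnC ![(_ + g _ * _)%N]addnC !modnMDl !modn_small.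
have Kpos : (0 < K ^ N)%N by rewrite expn_gt0 (leq_ltn_trans (leq0n _) (Hf ord_max)).
have Etop : f ord_max = g ord_max.
  by move: E; rewrite Eab => /addnI /eqP; rewrite eqn_pmul2r // => /eqP.
have IH' := IH _ _ (fun j => Hf (widen_ord (leqnSn N) j)) (fun j => Hg (widen_ord (leqnSn N) j)) Eab.
have [jl|jn] := ltnP j N.
  have -> : j = widen_ord (leqnSn N) (Ordinal jl) by apply: val_inj.
  exact: IH'.
have -> : j = ord_max by apply: val_inj => /=; have := ltn_ord j; lia.
exact: Etop.
Qed.
End Digits.
Section Kron.
Variable R : numClosedFieldType.
Variable I : finType.
Implicit Types (p q : mpoly R I) (x : I -> R) (m : mono I).

Definition code (K : nat) m : nat := (\sum_i m i * K ^ enum_rank i)%N.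

Lemma codeE K m : code K m = dsum K (fun j : 'I_#|I| => m (enum_val j)).
Proof.
rewrite /code /dsum (big_enum_val (A:=I)) /=; apply: eq_bigr => j _.
by rewrite enum_valK.
Qed.

Lemma code_inj K m1 m2 : (forall i, m1 i < K)%N -> (forall i, m2 i < K)%N ->
  code K m1 = code K m2 -> m1 = m2.
Proof.
move=> H1 H2; rewrite !codeE => /dsum_inj E; apply/ffunP => i.
have := E (fun j => H1 _) (fun j => H2 _) (enum_rank i).
by rewrite enum_rankK.
Qed.

Lemma code_lt K m : (forall i, m i < K)%N -> (code K m < K ^ #|I|)%N.
Proof. by move=> H; rewrite codeE; apply: dsum_lt => j; apply: H. Qed.

Definition kpt (K : nat) (s : R) : I -> R := fun i => s ^+ (K ^ enum_rank i).

Lemma mmon_kpt K s m : mmon (kpt K s) m = s ^+ code K m.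
Proof.
rewrite /mmon /kpt /code -prodrXr; apply: eq_bigr => i _.
by rewrite -exprM mulnC.
Qed.

Definition kron (K : nat) p : {poly R} := \sum_(t <- p) t.1 *: 'X^(code K t.2).

Lemma kron_horner K p s : (kron K p).[s] = mpeval p (kpt K s).
Proof.
rewrite /kron horner_sum mpevalE; apply: eq_bigr => t _.
by rewrite hornerZ hornerXn mmon_kpt.
Qed.

Lemma kron_coef K p k : (kron K p)`_k = \sum_(t <- p) t.1 * (code K t.2 == k)%:R.
Proof.
rewrite /kron coef_sum; apply: eq_bigr => t _.
by rewrite coefZ coefXn eq_sym.
Qed.

Definition bounded (K : nat) p := forall t, t \in p -> forall i, (t.2 i < K)%N.

Lemma kron_coef_code K p m : bounded K p -> (forall i, m i < K)%N ->
  (kron K p)`_(code K m) = mcoef p m.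
Proof.
move=> Hb Hm; rewrite kron_coef /mcoef [RHS]big_mkcond /= big_seq [RHS]big_seq; apply: eq_bigr => t Ht.
have E : (code K t.2 == code K m) = (t.2 == m).
  apply/eqP/eqP => [|->] //; apply: code_inj => //; exact: Hb.
by rewrite E; case: (t.2 == m); rewrite ?mulr1 ?mulr0.
Qed.

Lemma kron_size K p : bounded K p -> (size (kron K p) <= K ^ #|I|)%N.
Proof.
move=> Hb; apply/leq_sizeP => j Hj; rewrite kron_coef big_seq big1 // => t Ht.
have := code_lt (Hb t Ht); case: eqP => [->|_]; last by rewrite mulr0.
by rewrite ltnNge Hj.
Qed.

Definition bnd p : nat := (\max_(t <- p) \max_i t.2 i)%N.

Lemma bounded_bnd p : bounded (bnd p).+1 p.
Proof.
move=> t Ht i; rewrite ltnS /bnd.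
apply: leq_trans (leq_bigmax i) _.
exact: (@leq_bigmax_seq _ p xpredT (fun t : R * mono I => \max_i t.2 i) t Ht isT).
Qed.

Lemma bounded_mono K K' p : bounded K p -> (K <= K')%N -> bounded K' p.
Proof. by move=> H HK t Ht i; apply: leq_trans (H t Ht i) HK. Qed.

Lemma mcoef_nz_in p m : mcoef p m != 0 -> m \in [seq t.2 | t <- p].
Proof. by apply: contraR => /mcoef_notin ->. Qed.

Lemma bounded_mem K p m : bounded K p -> m \in [seq t.2 | t <- p] -> forall i, (m i < K)%N.
Proof. by move=> Hb /mapP [t Ht ->]; apply: Hb. Qed.

Lemma natr_injR : injective (fun k : nat => (k%:R : R)).
Proof. by move=> a b /eqP; rewrite eqr_nat => /eqP. Qed.

Lemma roots_fin (r : {poly R}) (w : nat -> R) N : injective w -> (size r <= N)%N ->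
  (forall k, (k < N)%N -> r.[w k] = 0) -> r = 0.
Proof.
move=> Hw Hs Hr; apply/eqP; apply: contraT => Hr0.
have := max_poly_roots (rs := map w (iota 0 N)) Hr0.
rewrite map_inj_uniq // iota_uniq size_map size_iota ltnNge Hs => H.
apply: H => //; apply/allP => z /mapP [k]; rewrite mem_iota add0n => /andP [_ Hk] ->.
by apply/rootP; apply: Hr.
Qed.

Lemma kron_T2 p : (forall x, mpeval p x = 0) -> forall m, mcoef p m = 0.
Proof.
move=> H m; apply/eqP; apply: contraT => Hm.
set K := (bnd p).+1.
have Hb : bounded K p by apply: bounded_bnd.
have Hmb := bounded_mem Hb (mcoef_nz_in Hm).
have Hr : kron K p = 0.
  apply: (roots_fin natr_injR (leqnn _)) => k _.
  by rewrite kron_horner H.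
by move: Hm; rewrite -(kron_coef_code Hb Hmb) Hr coef0 eqxx.
Qed.

Lemma mpeq_evalP p q : (forall x, mpeval p x = mpeval q x) -> mpeq p q.
Proof.
move=> H m.
have H0 : forall x, mpeval (p ++ mpscale (-1) q) x = 0.
  by move=> x; rewrite mpeval_cat mpeval_scale H mulN1r subrr.
have := kron_T2 H0 m.
rewrite mcoef_cat mcoef_scale mulN1r => E.
by apply/eqP; rewrite -subr_eq0 E.
Qed.

Lemma mpeq_eval p q : mpeq p q -> forall x, mpeval p x = mpeval q x.
Proof.
move=> H x; set s := undup [seq t.2 | t <- p ++ q].
have Hs : forall r, r \in [:: p; q] -> forall t, t \in r -> t.2 \in s.
  move=> r; rewrite !inE => /orP [] /eqP -> t Ht; rewrite mem_undup map_f //.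
    by rewrite mem_cat Ht.
  by rewrite mem_cat Ht orbT.
have Ep : \sum_(t<-p) t.1 * mmon x t.2 = \sum_(m<-s) mcoef p m * mmon x m.
  by apply: regroup_gen; [exact: undup_uniq | apply: Hs; rewrite inE eqxx].
have Eq : \sum_(t<-q) t.1 * mmon x t.2 = \sum_(m<-s) mcoef q m * mmon x m.
  by apply: regroup_gen; [exact: undup_uniq | apply: Hs; rewrite !inE eqxx orbT].
rewrite !mpevalE Ep Eq.
by apply: eq_bigr => m _; rewrite H.
Qed.

Lemma mpeqE p q : mpeq p q <-> forall x, mpeval p x = mpeval q x.
Proof. by split; [apply: mpeq_eval | apply: mpeq_evalP]. Qed.

Lemma nz_point p : (exists x, mpeval p x != 0) -> mpnz p.
Proof.
case=> x Hx; apply: NNPP => Hn.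
case/negP: Hx; apply/eqP; apply: eval_zero_coef => m.
by apply/eqP; apply: contraT => Hm; exfalso; apply: Hn; exists m.
Qed.

Lemma NZ2 p q : mpnz p -> mpnz q -> exists x, mpeval p x != 0 /\ mpeval q x != 0.
Proof.
move=> [mp Hp] [mq Hq].
set K := (maxn (bnd p) (bnd q)).+1.
have Hbp : bounded K p by apply: (bounded_mono (K:=(bnd p).+1)); [exact: bounded_bnd | rewrite ltnS leq_maxl].
have Hbq : bounded K q by apply: (bounded_mono (K:=(bnd q).+1)); [exact: bounded_bnd | rewrite ltnS leq_maxr].
have Kp : kron K p != 0.
  apply/eqP => Hz; move: (Hp).
  by rewrite -(kron_coef_code Hbp (bounded_mem Hbp (mcoef_nz_in Hp))) Hz coef0 eqxx.
have Kq : kron K q != 0.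
  apply/eqP => Hz; move: (Hq).
  by rewrite -(kron_coef_code Hbq (bounded_mem Hbq (mcoef_nz_in Hq))) Hz coef0 eqxx.
have Kpq : kron K p * kron K q != 0 by rewrite mulf_neq0.
have [k Hk] : exists k : nat, (kron K p * kron K q).[k%:R] != 0.
  apply: NNPP => Hn; case/negP: Kpq; apply/eqP.
  apply: (roots_fin natr_injR (leqnn _)) => k _.
  by apply/eqP; apply: contraT => Hk; exfalso; apply: Hn; exists k.
exists (kpt K k%:R); move: Hk; rewrite hornerM !kron_horner mulf_eq0 negb_or.
by case/andP.
Qed.

Lemma kron_fin K p : bounded K p ->
  (forall k, (k < K ^ #|I|)%N -> mpeval p (kpt K k%:R) = 0) -> forall x, mpeval p x = 0.
Proof.
move=> Hb H; apply: eval_zero_coef => m.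
have Hr : kron K p = 0.
  apply: (roots_fin natr_injR (kron_size Hb)) => k Hk.
  by rewrite kron_horner H.
have [Hm|Hm] := boolP (m \in [seq t.2 | t <- p]); last exact: mcoef_notin.
by rewrite -(kron_coef_code Hb (bounded_mem Hb Hm)) Hr coef0.
Qed.

End Kron.
Section SubstEval.
Variable R : numClosedFieldType.
Variable n : nat.

Lemma mpeval_lin (T : 'M[R]_n) i Z : mpeval (lin_form T i) Z = mxapp T Z i.
Proof.
rewrite mpevalE /lin_form big_map big_enum /=; apply: eq_bigr => j _.
by rewrite mmonX.
Qed.

Lemma mpeval_exp (p : mpoly R 'I_n) k Z : mpeval (mpexp p k) Z = mpeval p Z ^+ k.
Proof.
elim: k => [|k IH]; first by rewrite /mpexp /= mpeval_one expr0.
by rewrite /mpexp iterS -/(mpexp p k) mpeval_mul IH exprS.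
Qed.

Lemma mpeval_foldr (A : Type) (s : seq A) (f : A -> mpoly R 'I_n) Z :
  mpeval (foldr (@mpmul R 'I_n) (mpone R 'I_n) (map f s)) Z = \prod_(a <- s) mpeval (f a) Z.
Proof.
elim: s => [|a s IH]; first by rewrite big_nil mpeval_one.
by rewrite /= mpeval_mul IH big_cons.
Qed.

Lemma mpeval_subst (p : mpoly R 'I_n) (T : 'M[R]_n) Z :
  mpeval (subst p T) Z = mpeval p (mxapp T Z).
Proof.
rewrite /subst mpeval_sum big_map mpevalE; apply: eq_bigr => t _.
rewrite mpeval_scale /subst_mono mpeval_foldr big_enum /=; congr (_ * _).
by apply: eq_bigr => i _; rewrite mpeval_exp mpeval_lin.
Qed.

Lemma mxappM (A B : 'M[R]_n) Z : mxapp (A *m B) Z = mxapp A (mxapp B Z).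
Proof.
apply: functional_extensionality => i; rewrite /mxapp.
under eq_bigr => j _ do rewrite mxE mulr_suml.
rewrite exchange_big /=; apply: eq_bigr => k _; rewrite mulr_sumr.
by apply: eq_bigr => j _; rewrite mulrA.
Qed.

Lemma mxapp1 Z : mxapp (1%:M : 'M[R]_n) Z = Z.
Proof.
apply: functional_extensionality => i; rewrite /mxapp (bigD1 i) //= big1 ?addr0.
  by rewrite mxE eqxx mul1r.
by move=> j /negbTE Hj; rewrite mxE eq_sym Hj mul0r.
Qed.
End SubstEval.

Section PolyFun.
Variable R : numClosedFieldType.
Variable J : finType.

Definition polyfun (f : (J -> R) -> R) := exists p : mpoly R J, forall x, mpeval p x = f x.

Lemma pf_const c : polyfun (fun _ => c).
Proof. by exists [:: (c, mono0)] => x; rewrite mpeval_const. Qed.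

Lemma pf_var j : polyfun (fun x => x j).
Proof. by exists [:: (1, monoX j)] => x; rewrite mpeval_var. Qed.

Lemma pf_add f g : polyfun f -> polyfun g -> polyfun (fun x => f x + g x).
Proof. by move=> [p Hp] [q Hq]; exists (p ++ q) => x; rewrite mpeval_cat Hp Hq. Qed.

Lemma pf_mul f g : polyfun f -> polyfun g -> polyfun (fun x => f x * g x).
Proof. by move=> [p Hp] [q Hq]; exists (mpmul p q) => x; rewrite mpeval_mul Hp Hq. Qed.

Lemma pf_sum (A : Type) (s : seq A) (F : A -> (J -> R) -> R) :
  (forall a, polyfun (F a)) -> polyfun (fun x => \sum_(a <- s) F a x).
Proof.
move=> H; elim: s => [|a s IH].
  by have [p Hp] := pf_const 0; exists p => x; rewrite Hp big_nil.
by have [p Hp] := pf_add (H a) IH; exists p => x; rewrite Hp big_cons.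
Qed.

Lemma pf_prod (A : Type) (s : seq A) (F : A -> (J -> R) -> R) :
  (forall a, polyfun (F a)) -> polyfun (fun x => \prod_(a <- s) F a x).
Proof.
move=> H; elim: s => [|a s IH].
  by have [p Hp] := pf_const 1; exists p => x; rewrite Hp big_nil.
by have [p Hp] := pf_mul (H a) IH; exists p => x; rewrite Hp big_cons.
Qed.

Lemma pf_exp f k : polyfun f -> polyfun (fun x => f x ^+ k).
Proof.
move=> H; elim: k => [|k IH].
  by have [p Hp] := pf_const 1; exists p => x; rewrite Hp expr0.
by have [p Hp] := pf_mul H IH; exists p => x; rewrite Hp exprS.
Qed.

Lemma pf_eval (K : finType) (q : mpoly R K) (g : K -> (J -> R) -> R) :
  (forall k, polyfun (g k)) -> polyfun (fun x => mpeval q (fun k => g k x)).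
Proof.
move=> H.
have H1 : forall t : R * mono K, polyfun (fun x => t.1 * mmon (fun k => g k x) t.2).
  move=> t; apply: pf_mul; first exact: pf_const.
  rewrite /mmon; apply: pf_prod => k; exact: pf_exp.
have [p Hp] := pf_sum q H1.
by exists p => x; rewrite Hp mpevalE.
Qed.

Lemma pf_nz f g : polyfun f -> polyfun g -> (exists x, f x != 0) -> (exists x, g x != 0) ->
  exists x, f x != 0 /\ g x != 0.
Proof.
move=> [p Hp] [q Hq] [x Hx] [y Hy].
have Np : mpnz p by apply: nz_point; exists x; rewrite Hp.
have Nq : mpnz q by apply: nz_point; exists y; rewrite Hq.
by have [z [H1 H2]] := NZ2 Np Nq; exists z; rewrite -Hp -Hq.
Qed.
End PolyFun.

Section DetPF.
Variable R : numClosedFieldType.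
Variable n : nat.

Definition mx_of (x : 'I_n * 'I_n -> R) : 'M[R]_n := \matrix_(i, j) x (i, j).

Lemma pf_det : polyfun (fun x : 'I_n * 'I_n -> R => \det (mx_of x)).
Proof.
have H1 : forall s : {perm 'I_n}, polyfun (fun (x : 'I_n * 'I_n -> R) => (-1) ^+ s * \prod_i (mx_of x) i (s i)).
  move=> s; apply: pf_mul; first exact: pf_const.
  apply: pf_prod => i; rewrite /mx_of.
  have [p Hp] := pf_var R (i, s i); exists p => x; rewrite Hp mxE //.
have [p Hp] := pf_sum (index_enum {perm 'I_n}) H1.
by exists p => x; rewrite Hp.
Qed.
End DetPF.
Section BiId.
Variable R : numClosedFieldType.

Lemma roots_inf (r : {poly R}) (w : nat -> R) : injective w ->
  (forall k, r.[w k] = 0) -> r = 0.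
Proof. by move=> Hw H; apply: (roots_fin Hw (leqnn _)) => k _; apply: H. Qed.

Definition wu (k : nat) : R := (k%:R + 'i) / (k%:R - 'i).

Lemma wu_nz k : (k%:R - 'i != 0 :> R) /\ (k%:R + 'i != 0 :> R).
Proof.
have H : (k%:R - 'i) * (k%:R + 'i) = ((k * k + 1)%N%:R : R).
  rewrite natrD natrM; have := sqrCi R; rewrite expr2 => Hi.
  by rewrite mulrDr !mulrBl Hi; ring.
have : ((k * k + 1)%N%:R : R) != 0 by rewrite pnatr_eq0 addn1.
by rewrite -H mulf_eq0 negb_or => /andP [].
Qed.

Lemma wu_unit k : wu k * (wu k)^* = 1.
Proof.
have [H1 H2] := wu_nz k.
rewrite /wu fmorph_div rmorphD rmorphB /= conjC_nat conjCi.
rewrite -[(k%:R : R) - - 'i]/(k%:R - - 'i) opprK.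
by rewrite [k%:R + - 'i]/(k%:R - 'i); field; rewrite H1 H2.
Qed.

Lemma wu_inj : injective wu.
Proof.
move=> a b E.
have [Ha1 Ha2] := wu_nz a; have [Hb1 Hb2] := wu_nz b.
move/eqP: E; rewrite /wu eqr_div // => /eqP E.
have E2 : ('i : R) *+ 2 * ((b%:R : R) - a%:R) = 0.
  transitivity (((a%:R : R) + 'i) * (b%:R - 'i) - (b%:R + 'i) * (a%:R - 'i)); first by ring.
  by rewrite E subrr.
move/eqP: E2; rewrite mulf_eq0 mulrn_eq0 (negbTE (neq0Ci R)) /= subr_eq0 eqr_nat.
by move=> /eqP.
Qed.

Lemma wu_neq0 k : wu k != 0.
Proof.
apply/eqP => E; have := wu_unit k; by rewrite E mul0r => /eqP; rewrite eq_sym oner_eq0.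
Qed.

Definition pscale (P : {poly R}) (w : R) : {poly R} := \poly_(i < size P) (P`_i * w ^+ i).

Lemma pscale_coef P w i : (pscale P w)`_i = P`_i * w ^+ i.
Proof.
rewrite /pscale coef_poly; case: ltnP => // H.
by rewrite (leq_sizeP _ _ (leqnn _) _ H) mul0r.
Qed.

Lemma pscale_horner P w x : (pscale P w).[x] = P.[w * x].
Proof.
rewrite (horner_coef_wide _ (size_poly _ _)) (horner_coef_wide _ (leqnn _)).
by apply: eq_bigr => i _; rewrite pscale_coef exprMn mulrA.
Qed.

Lemma biid (k : nat) (P Q : 'I_k -> {poly R}) :
  (forall s, \sum_j (P j).[s] * (Q j).[s^*] = 0) ->
  forall a b, \sum_j (P j)`_a * (Q j)`_b = 0.
Proof.
move=> H a b.
set c := fun u v => \sum_j (P j)`_u * (Q j)`_v.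
set m := (a + b)%N.
set C : {poly R} := \sum_(u < m.+1) c u (m - u)%N *: 'X^(2 * u).
have HC : C = 0.
  apply: (roots_inf wu_inj) => kk.
  move: (wu_unit kk) (wu_neq0 kk); set w := wu kk; clearbody w => Hw Hw0.
  set S := \sum_j pscale (P j) w * pscale (Q j) w^*.
  have HS : S = 0.
    apply: (roots_inf (@natr_injR R)) => x.
    rewrite /S horner_sum; transitivity (\sum_j (P j).[w * x%:R] * (Q j).[(w * x%:R)^*]); last exact: H.
    apply: eq_bigr => j _.
    by rewrite hornerM !pscale_horner [(w * _)^*]rmorphM /= conjC_nat.
  have HSm : \sum_j \sum_(u < m.+1) (P j)`_u * (Q j)`_(m - u) * (w ^+ u * w^* ^+ (m - u)) = 0.
    rewrite -[RHS](coef0 _ m) -HS /S coef_sum; apply: eq_bigr => j _.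
    rewrite coefM; apply: eq_bigr => u _; rewrite !pscale_coef; ring.
  rewrite /C horner_sum.
  have -> : \sum_(u < m.+1) (c u (m - u)%N *: 'X^(2 * u)).[w]
    = w ^+ m * \sum_j \sum_(u < m.+1) (P j)`_u * (Q j)`_(m - u) * (w ^+ u * w^* ^+ (m - u)).
    rewrite exchange_big mulr_sumr; apply: eq_bigr => u _.
    rewrite hornerZ hornerXn /c mulr_suml mulr_sumr; apply: eq_bigr => j _.
    have Hu : (u <= m)%N by rewrite -ltnS.
    have -> : w ^+ m = w ^+ u * w ^+ (m - u) by rewrite -exprD subnKC.
    have -> : w ^+ (2 * u) = w ^+ u * w ^+ u * (w * w^*) ^+ (m - u)
      by rewrite Hw expr1n mulr1 -exprD addnn -mul2n.
    rewrite exprMn; ring.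
  by rewrite HSm mulr0.
have := congr1 (fun p : {poly R} => p`_(2 * a)) HC; rewrite /= coef0 /C coef_sum.
have Ha : (a < m.+1)%N by rewrite ltnS leq_addr.
rewrite (bigD1 (Ordinal Ha)) //= coefZ coefXn eqxx mulr1 big1 ?addr0.
  by rewrite /m addKn.
move=> u Hu; rewrite coefZ coefXn eqn_pmul2l //.
have -> : (a == u :> nat) = false.
  by apply/negbTE; move: Hu; apply: contra => /eqP E; apply/eqP; apply: val_inj.
by rewrite mulr0.
Qed.
End BiId.
Section Lines.
Variable R : numClosedFieldType.
Variable I : finType.

Definition lp (h : mpoly R I) (Z V : I -> R) : {poly R} :=
  \sum_(t <- h) t.1 *: \prod_i ((Z i)%:P + V i *: 'X) ^+ t.2 i.

Lemma lp_horner h Z V s : (lp h Z V).[s] = mpeval h (fun i => Z i + s * V i).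
Proof.
rewrite /lp horner_sum mpevalE; apply: eq_bigr => t _.
rewrite hornerZ horner_prod /mmon; congr (_ * _); apply: eq_bigr => i _.
by rewrite horner_exp hornerD hornerC hornerZ hornerX mulrC.
Qed.

Lemma lp_conj h Z V (x : R) : x^* = x ->
  (map_poly Num.conj_op (lp h Z V)).[x] = (mpeval h (fun i => Z i + x * V i))^*.
Proof.
move=> Hx; rewrite -{1}Hx.
have := horner_map Num.conj_op (lp h Z V) x => /= ->.
by rewrite lp_horner.
Qed.

Definition Herm (k : nat) (e : 'I_k -> R) (h : 'I_k -> mpoly R I) (Z : I -> R) : R :=
  \sum_j e j * mpeval (h j) Z * (mpeval (h j) Z)^*.

Lemma sesq (k : nat) (e : 'I_k -> R) (h : 'I_k -> mpoly R I) :
  (forall Z, Herm e h Z = 0) ->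
  forall Z W, \sum_j e j * mpeval (h j) W * (mpeval (h j) Z)^* = 0.
Proof.
move=> H Z W.
set V := fun i => W i - Z i.
set P := fun j => e j *: lp (h j) Z V.
set Q := fun j => map_poly Num.conj_op (lp (h j) Z V).
have HPQ : forall s, \sum_j (P j).[s] * (Q j).[s^*] = 0.
  move=> s; rewrite -[RHS](H (fun i => Z i + s * V i)) /Herm; apply: eq_bigr => j _.
  rewrite /P /Q hornerZ lp_horner.
  have := horner_map Num.conj_op (lp (h j) Z V) s => /= ->.
  by rewrite lp_horner.
have HB := biid HPQ.
have E : \sum_j (Q j)`_0 *: P j = 0.
  apply/polyP => a; rewrite coef0 coef_sum -[RHS](HB a 0%N); apply: eq_bigr => j _.
  by rewrite coefZ mulrC.
have := congr1 (fun p : {poly R} => p.[1]) E; rewrite /= horner0 horner_sum.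
move=> E2; rewrite -[RHS]E2; apply: eq_bigr => j _.
rewrite hornerZ /P hornerZ lp_horner /Q coef_map /= -horner_coef0 lp_horner.
have -> : (fun i => Z i + 1 * V i) = W.
  by apply: functional_extensionality => i; rewrite mul1r /V addrC subrK.
have -> : (fun i => Z i + 0 * V i) = Z.
  by apply: functional_extensionality => i; rewrite mul0r addr0.
by rewrite mulrC mulrA.
Qed.
End Lines.

Section Cone.
Variable R : numClosedFieldType.
Variable n : nat.

Lemma herm_cone (b : nat) (Z0 : 'I_n -> R) (k : nat) (e : 'I_k -> R) (h : 'I_k -> mpoly R 'I_n) :
  hnorm b Z0 != 0 ->
  (forall Z, hnorm b Z * Herm e h Z = 0) -> forall Z, Herm e h Z = 0.
Proof.
move=> H0 H Z.
set V := fun i => Z i - Z0 i.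
set sg := fun i : 'I_n => (if (i <= b)%N then -1 else 1 : R).
set Hp : {poly R} := \sum_i sg i *: (((Z0 i)%:P + V i *: 'X) * (((Z0 i)^*)%:P + (V i)^* *: 'X)).
set Pp : {poly R} := \sum_j e j *: (lp (h j) Z0 V * map_poly Num.conj_op (lp (h j) Z0 V)).
have Hpx : forall x : R, x^* = x -> Hp.[x] = hnorm b (fun i => Z0 i + x * V i).
  move=> x Hx; rewrite /Hp horner_sum /hnorm; apply: eq_bigr => i _.
  rewrite hornerZ hornerM !hornerD !hornerC !hornerZ !hornerX.
  by rewrite /sg [x * V i]mulrC [(Z0 i + _)^*]rmorphD rmorphM /= Hx.
have Ppx : forall x : R, x^* = x -> Pp.[x] = Herm e h (fun i => Z0 i + x * V i).
  move=> x Hx; rewrite /Pp horner_sum /Herm; apply: eq_bigr => j _.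
  by rewrite hornerZ hornerM lp_conj // lp_horner mulrA.
have Hp0 : Hp != 0.
  apply/eqP => Hz; move: H0; have := Hpx 0 (rmorph0 _); rewrite Hz horner0.
  have -> : (fun i => Z0 i + 0 * V i) = Z0.
    by apply: functional_extensionality => i; rewrite mul0r addr0.
  by move=> <-; rewrite eqxx.
have HPP : Hp * Pp = 0.
  apply: (roots_inf (@natr_injR R)) => x.
  by rewrite hornerM Hpx ?conjC_nat // Ppx ?conjC_nat // H.
have Pp0 : Pp = 0.
  by move/eqP: HPP; rewrite mulf_eq0 (negbTE Hp0) /= => /eqP.
have := Ppx 1 (rmorph1 _); rewrite Pp0 horner0.
have -> : (fun i => Z0 i + 1 * V i) = Z.
  by apply: functional_extensionality => i; rewrite mul1r /V addrC subrK.
by move=> <-.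
Qed.
End Cone.
Section Span.
Variable R : numClosedFieldType.
Variable I : finType.

Lemma mpeval_lincomb (q : nat) (c : 'I_q -> R) (b : 'I_q -> mpoly R I) Z :
  mpeval (mpsum [seq mpscale (c j) (b j) | j <- enum 'I_q]) Z = \sum_j c j * mpeval (b j) Z.
Proof.
by rewrite mpeval_sum big_map big_enum /=; apply: eq_bigr => j _; rewrite mpeval_scale.
Qed.

Lemma bounded_lincomb K (q : nat) (c : 'I_q -> R) (b : 'I_q -> mpoly R I) :
  (forall j, bounded K (b j)) -> bounded K (mpsum [seq mpscale (c j) (b j) | j <- enum 'I_q]).
Proof.
move=> H t /flattenP [s /mapP [j _ ->]] /mapP [t' Ht' ->] /=.
exact: H Ht'.
Qed.

Lemma sum_mul_lr (N : nat) (x y : R) (F : 'I_N -> R) :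
  x * (\sum_l F l) * y = \sum_l x * F l * y.
Proof. by rewrite mulr_sumr mulr_suml. Qed.

Lemma span_lemma (p q : nat) (al : 'I_p -> R) (a : 'I_p -> mpoly R I)
    (be : 'I_q -> R) (b : 'I_q -> mpoly R I) :
  (forall Z W, \sum_i al i * mpeval (a i) W * (mpeval (a i) Z)^* =
               \sum_j be j * mpeval (b j) W * (mpeval (b j) Z)^*) ->
  (forall j, be j != 0) ->
  (forall c : 'I_q -> R, (forall Z, \sum_j c j * mpeval (b j) Z = 0) -> forall j, c j = 0) ->
  forall j, exists d : 'I_p -> R, forall W, mpeval (b j) W = \sum_i d i * mpeval (a i) W.
Proof.
move=> Hs Hbe Hind j.
pose K := (\max_j bnd (b j)).+1.
have HbK : forall j, bounded K (b j).
  move=> j'; apply: (bounded_mono (K:=(bnd (b j')).+1)); first exact: bounded_bnd.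
  by rewrite ltnS (leq_bigmax j').
pose N := (K ^ #|I|)%N.
pose Zl := fun l : 'I_N => @kpt R I K (l%:R : R).
pose Vm : 'M[R]_(q, N) := \matrix_(j', l) (mpeval (b j') (Zl l))^*.
have Hfree : row_free Vm.
  rewrite -kermx_eq0; apply/rowV0P => v /sub_kermxP Hv.
  have Hc : forall Z, \sum_j' (v 0 j')^* * mpeval (b j') Z = 0.
    move=> Z; rewrite -mpeval_lincomb; apply: (kron_fin (K:=K)); first exact: bounded_lincomb.
    move=> k Hk; rewrite mpeval_lincomb.
    have := congr1 (fun M : 'M[R]_(1, N) => (M 0 (Ordinal Hk))^*) Hv.
    rewrite /= !mxE rmorph0 rmorph_sum /= => E0; rewrite -[RHS]E0; apply: eq_bigr => j' _.
    by rewrite mxE rmorphM /= conjCK mulrC.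
  apply/matrixP => i j'; rewrite ord1 mxE.
  by have := Hind _ Hc j' => /eqP; rewrite conjC_eq0 => /eqP.
have [Y HY] := row_freeP Hfree.
have HYj : forall j', \sum_l (mpeval (b j') (Zl l))^* * Y l j = (j' == j)%:R.
  move=> j'; have := congr1 (fun M : 'M[R]_q => M j' j) HY; rewrite /= !mxE => E0; rewrite -[RHS]E0.
  by apply: eq_bigr => l _; rewrite mxE.
exists (fun i => (be j)^-1 * (al i * \sum_l (mpeval (a i) (Zl l))^* * Y l j)) => W.
have E : be j * mpeval (b j) W =
    \sum_l Y l j * \sum_j' be j' * mpeval (b j') W * (mpeval (b j') (Zl l))^*.
  symmetry; under eq_bigr => l _ do rewrite mulr_sumr.
  rewrite exchange_big /= (bigD1 j) //= [X in _ + X]big1 ?addr0.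
    transitivity (be j * mpeval (b j) W * \sum_l (mpeval (b j) (Zl l))^* * Y l j).
      by rewrite mulr_sumr; apply: eq_bigr => l _; ring.
    by rewrite HYj eqxx mulr1.
  move=> j' Hj'.
  transitivity (be j' * mpeval (b j') W * \sum_l (mpeval (b j') (Zl l))^* * Y l j).
    by rewrite mulr_sumr; apply: eq_bigr => l _; ring.
  by rewrite HYj (negbTE Hj') mulr0.
have E2 : be j * mpeval (b j) W = \sum_i al i * (\sum_l (mpeval (a i) (Zl l))^* * Y l j) * mpeval (a i) W.
  rewrite E; under eq_bigr => l _ do rewrite -Hs mulr_sumr.
  rewrite exchange_big /=; apply: eq_bigr => i _; rewrite sum_mul_lr.
  by apply: eq_bigr => l _; ring.
apply: (mulfI (Hbe j)); rewrite E2 mulr_sumr; apply: eq_bigr => i _.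
by field; apply: Hbe.
Qed.
End Span.
Section Book.
Variable R : numClosedFieldType.
Variable I : finType.
Local Notation mp := (mpoly R I).

Lemma sum_seq_ord (T : Type) (x0 : T) (L : seq T) (F : T -> R) :
  \sum_(i < size L) F (nth x0 L i) = \sum_(x <- L) F x.
Proof. by rewrite (big_nth x0) big_mkord. Qed.

Definition sgn (hp : seq mp) (i : nat) : R := if (i < size hp)%N then 1 else -1.

Lemma sum_hm (hp hm : seq mp) (f : mp -> R) :
  \sum_(h <- hp) f h - \sum_(h <- hm) f h =
  \sum_(i < size (hp ++ hm)) sgn hp i * f (nth [::] (hp ++ hm) i).
Proof.
rewrite -(big_mkord xpredT (fun i => sgn hp i * f (nth [::] (hp ++ hm) i))).
rewrite (@big_cat_nat _ _ _ (size hp) 0 (size (hp ++ hm))) ?size_cat ?leq_addr //=.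
congr (_ + _).
  rewrite (big_nth [::]) !big_nat; apply: eq_bigr => i /andP [_ Hi].
  by rewrite /sgn Hi nth_cat Hi mul1r.
rewrite -{1}[size hp]add0n big_addn addKn -sumrN [in LHS](big_nth [::]) !big_nat.
apply: eq_bigr => i /andP [_ Hi].
by rewrite /sgn nth_cat ltnNge leq_addl /= addnK mulN1r.
Qed.

Lemma sgn_nz hp i : sgn hp i != 0.
Proof. by rewrite /sgn; case: ifP => _; rewrite ?oppr_eq0 oner_eq0. Qed.

Lemma sgn_real hp i : (sgn hp i)^* = sgn hp i.
Proof. by rewrite /sgn; case: ifP => _; rewrite ?rmorphN rmorph1. Qed.

Lemma indep_conv (L : seq mp) :
  (forall cs : seq R, size cs = size L ->
     mpeq (mpsum [seq mpscale c.1 c.2 | c <- zip cs L]) [::] -> all (fun c => c == 0) cs) ->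
  forall c : 'I_(size L) -> R,
    (forall Z, \sum_j c j * mpeval (nth [::] L j) Z = 0) -> forall j, c j = 0.
Proof.
move=> H c Hc j.
set cs := [seq c i | i <- enum 'I_(size L)].
have Hs : size cs = size L by rewrite size_map size_enum_ord.
have Hm : mpeq (mpsum [seq mpscale x.1 x.2 | x <- zip cs L]) [::].
  apply: mpeq_evalP => Z; rewrite mpeval_nil mpeval_sum big_map.
  rewrite (big_nth (0, [::])) size_zip Hs minnn big_mkord -[RHS](Hc Z).
  apply: eq_bigr => i _; rewrite nth_zip // mpeval_scale /=.
  by rewrite (nth_map i) ?size_enum_ord // nth_ord_enum.
have /allP /(_ (c j)) := H cs Hs Hm.
by rewrite map_f ?mem_enum // => /(_ isT) /eqP.
Qed.

Definition gen_comb (L : seq mp) (c : 'I_(size L) -> mp) : mp :=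
  mpsum [seq mpmul (c i) (nth [::] L i) | i <- enum 'I_(size L)].

Arguments gen_comb : clear implicits.

Lemma gen_comb_eval L c Z :
  mpeval (gen_comb L c) Z = \sum_i mpeval (c i) Z * mpeval (nth [::] L i) Z.
Proof.
rewrite /gen_comb mpeval_sum big_map big_enum /=; apply: eq_bigr => i _.
by rewrite mpeval_mul.
Qed.

Lemma in_gen_iff (L : seq mp) p :
  in_ideal_gen L p <-> exists c : 'I_(size L) -> mp,
    forall Z, mpeval p Z = \sum_i mpeval (c i) Z * mpeval (nth [::] L i) Z.
Proof.
split.
  move=> [cs [Hs Hp]]; exists (fun i => nth [::] cs i) => Z.
  rewrite (mpeq_eval Hp) mpeval_sum big_map.
  rewrite (big_nth ([::], [::])) size_zip Hs minnn big_mkord.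
  by apply: eq_bigr => i _; rewrite nth_zip // mpeval_mul.
move=> [c Hc].
exists [seq c i | i <- enum 'I_(size L)]; split; first by rewrite size_map size_enum_ord.
apply: mpeq_evalP => Z; rewrite Hc mpeval_sum big_map.
rewrite (big_nth ([::], [::])) size_zip size_map size_enum_ord minnn big_mkord.
apply: eq_bigr => i _; rewrite nth_zip; last by rewrite size_map size_enum_ord.
rewrite /= (@mpeval_mul R I).
by rewrite (nth_map i) ?size_enum_ord // nth_ord_enum.
Qed.

Lemma in_gen_comb L c : in_ideal_gen L (gen_comb L c).
Proof. by apply/in_gen_iff; exists c => Z; rewrite gen_comb_eval. Qed.

Lemma in_ideal_ext (le : mono I -> mono I -> Prop) (J J' : mp -> Prop) m :
  (forall q, J q <-> J' q) -> in_ideal le J m <-> in_ideal le J' m.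
Proof.
move=> H; split=> [[p [m0 [H1 H2 H3 H4 H5]]]|[p [m0 [H1 H2 H3 H4 H5]]]];
  exists p, m0; split => //; exact/H.
Qed.
End Book.
Arguments gen_comb {R I} L c.

Section Combine.
Variable R : numClosedFieldType.
Variable n : nat.
Local Notation mp := (mpoly R 'I_n).

Lemma combine (b : nat) (i0 : 'I_n) (kF kG : nat) (al : 'I_kF -> R) (a : 'I_kF -> mp)
    (be : 'I_kG -> R) (bb : 'I_kG -> mp) :
  (forall Z, hnorm b Z * (\sum_i al i * mpeval (a i) Z * (mpeval (a i) Z)^*
                          - \sum_j be j * mpeval (bb j) Z * (mpeval (bb j) Z)^*) = 0) ->
  forall Z W, \sum_i al i * mpeval (a i) W * (mpeval (a i) Z)^* =
              \sum_j be j * mpeval (bb j) W * (mpeval (bb j) Z)^*.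
Proof.
move=> H.
set L := [seq (al i, a i) | i <- enum 'I_kF] ++ [seq (- be j, bb j) | j <- enum 'I_kG].
set e := fun i : 'I_(size L) => (nth (0, [::]) L i).1.
set h := fun i : 'I_(size L) => (nth (0, [::]) L i).2.
have HL : forall W Z, \sum_i e i * mpeval (h i) W * (mpeval (h i) Z)^* =
   \sum_i al i * mpeval (a i) W * (mpeval (a i) Z)^*
   - \sum_j be j * mpeval (bb j) W * (mpeval (bb j) Z)^*.
  move=> W Z.
  rewrite (sum_seq_ord (0, [::]) L (fun x => x.1 * mpeval x.2 W * (mpeval x.2 Z)^*)).
  rewrite big_cat !big_map -sumrN; congr (_ + _).
  by apply: eq_bigr => j _; rewrite /= !mulNr.
set Z0 := fun i : 'I_n => ((i == i0)%:R : R).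
have HZ0 : hnorm b Z0 != 0.
  rewrite /hnorm (bigD1 i0) //= big1 ?addr0.
    rewrite /Z0 eqxx /= mulr1n rmorph1 mulr1.
    by case: ifP => _; rewrite ?mulr1 ?oppr_eq0 oner_eq0.
  by move=> i /negbTE Hi; rewrite /Z0 Hi mul0r mulr0.
have HH : forall Z, Herm e h Z = 0.
  apply: (herm_cone HZ0) => Z; rewrite /Herm HL; exact: H.
move=> Z W; apply/eqP; rewrite -subr_eq0 -HL; apply/eqP.
exact: (sesq HH).
Qed.
End Combine.
Lemma fchoice (A B : Type) (P : A -> B -> Prop) :
  (forall x, exists y, P x y) -> exists f : A -> B, forall x, P x (f x).
Proof.
move=> H; exists (fun x => proj1_sig (constructive_indefinite_description _ (H x))) => x.
exact: proj2_sig.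
Qed.

Section FindT.
Variable R : numClosedFieldType.
Variable n : nat.

Lemma mx_of_entries (x : ('I_n * 'I_n)%type -> R) : (fun ij : ('I_n * 'I_n)%type => (mx_of x) ij.1 ij.2) = x.
Proof. by apply: functional_extensionality => -[i j]; rewrite mxE. Qed.

Lemma mx_of_mx (M : 'M[R]_n) : mx_of (fun ij : ('I_n * 'I_n)%type => M ij.1 ij.2) = M.
Proof. by apply/matrixP => i j; rewrite mxE. Qed.

Lemma pf_ext (J : finType) (f g : (J -> R) -> R) : polyfun f -> (forall x, f x = g x) -> polyfun g.
Proof. by move=> [p Hp] H; exists p => x; rewrite Hp. Qed.

Lemma mpnz_pt (J : finType) (D : mpoly R J) : mpnz D -> exists x, mpeval D x != 0.
Proof.
move=> [m Hm]; apply: NNPP => Hn; move/negP: Hm; apply; apply/eqP.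
apply: kron_T2 => x; apply/eqP; apply: contraT => Hx; exfalso; apply: Hn; exists x.
by [].
Qed.

Lemma find_T (tau : 'M[R]_n) (D1 D2 : mpoly R (('I_n * 'I_n)%type)) :
  tau \in unitmx -> mpnz D1 -> mpnz D2 ->
  exists T : 'M[R]_n, [/\ \det T != 0, mpeval D2 (fun ij => T ij.1 ij.2) != 0 &
                          mpeval D1 (fun ij => (tau *m T) ij.1 ij.2) != 0].
Proof.
move=> Ut N1 N2.
set f := fun x : ('I_n * 'I_n)%type -> R => \det (mx_of x).
set g := fun x : ('I_n * 'I_n)%type -> R => mpeval D2 x.
set h := fun x : ('I_n * 'I_n)%type -> R => mpeval D1 (fun ij => (tau *m mx_of x) ij.1 ij.2).
have Pf : polyfun f by exact: pf_det.
have Pg : polyfun g by exists D2.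
have Ph : polyfun h.
  apply: pf_eval => ij.
  have Hs : polyfun (fun x : ('I_n * 'I_n)%type -> R => \sum_k tau ij.1 k * x (k, ij.2)).
    by apply: pf_sum => k; apply: pf_mul; [exact: pf_const | exact: pf_var].
  refine (pf_ext Hs _); move=> x; rewrite mxE.
  by apply: eq_bigr => k _; rewrite mxE.
have Nf : exists x, f x != 0.
  exists (fun ij => (1%:M : 'M[R]_n) ij.1 ij.2); rewrite /f.
  have -> : mx_of (fun ij : ('I_n * 'I_n)%type => (1%:M : 'M[R]_n) ij.1 ij.2) = 1%:M.
    by apply/matrixP => i j; rewrite mxE.
  by rewrite det1 oner_eq0.
have Ng : exists x, g x != 0 by exact: mpnz_pt.
have Nh : exists x, h x != 0.
  have [y Hy] := mpnz_pt N1.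
  exists (fun ij => (invmx tau *m mx_of y) ij.1 ij.2); rewrite /h.
  by rewrite mx_of_mx mulKVmx // mx_of_entries.
have Hx1 := pf_nz Pf Pg Nf Ng.
case: Hx1 => x1 [Hf1 Hg1].
have Pfg : polyfun (fun x => f x * g x) by exact: pf_mul.
have [x [Hfg Hh]] := pf_nz Pfg Ph (ex_intro _ x1 (mulf_neq0 Hf1 Hg1)) Nh.
move: Hfg; rewrite mulf_eq0 negb_or => /andP [Hf Hg].
exists (mx_of x); split => //.
by rewrite mx_of_entries.
Qed.
End FindT.

Unset Implicit Arguments.
Set Strict Implicit.

Theorem mainTheorem3 (R : numClosedFieldType) (a b A B : nat)
  (le : mono 'I_(a + b + 1) -> mono 'I_(a + b + 1) -> Prop)
  (Hle : monomial_order le) (Hvars : vars_ordered le)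
  (F G : 'I_(A + B + 1) -> mpoly R 'I_(a + b + 1))
  (HF : hom_map F) (HG : hom_map G)
  (HFQ : maps_HQ b B F) (HGQ : maps_HQ b B G)
  (tau : 'M[R]_(a + b + 1)) (chi : 'M[R]_(A + B + 1))
  (Htau : isAutHQ b tau) (Hchi : isAutHQ B chi)
  (Hcomp : forall Z, mapeval F (mxapp tau Z) = mxapp chi (mapeval G Z))
  (hpF hmF hpG hmG : seq (mpoly R 'I_(a + b + 1)))
  (HdF : holo_decomp_quot b B F hpF hmF) (HdG : holo_decomp_quot b B G hpG hmG)
  (M1 M2 : mono 'I_(a + b + 1) -> Prop)
  (H1 : is_gin le (in_ideal_gen (hpF ++ hmF)) M1)
  (H2 : is_gin le (in_ideal_gen (hpG ++ hmG)) M2) :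
  forall m, M1 m <-> M2 m.
Proof.
move: Htau => [Utau [lt [_ Hlt0 Hlt]]].
move: Hchi => [_ [lc [_ Hlc0 Hlc]]].
case: HdF => _ IndF EqF; case: HdG => _ IndG EqG.
set hF := hpF ++ hmF; set hG := hpG ++ hmG.
set kF := size hF; set kG := size hG.
pose al := fun i : 'I_kF => lt * sgn hpF i.
pose aa := fun i : 'I_kF => subst (nth [::] hF i) tau.
pose be := fun j : 'I_kG => lc * sgn hpG j.
pose bb := fun j : 'I_kG => nth [::] hG j.
have Hcomb : forall Z, hnorm b Z * (\sum_i al i * mpeval (aa i) Z * (mpeval (aa i) Z)^*
                 - \sum_j be j * mpeval (bb j) Z * (mpeval (bb j) Z)^*) = 0.
  move=> Z.
  have e1 := EqF (mxapp tau Z); rewrite Hcomp Hlc EqG Hlt in e1.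
  have QF : \sum_i al i * mpeval (aa i) Z * (mpeval (aa i) Z)^* =
    lt * (\sum_(h <- hpF) mpeval h (mxapp tau Z) * (mpeval h (mxapp tau Z))^*
          - \sum_(h <- hmF) mpeval h (mxapp tau Z) * (mpeval h (mxapp tau Z))^*).
    rewrite (sum_hm _ _ (fun h => mpeval h (mxapp tau Z) * (mpeval h (mxapp tau Z))^*)).
    rewrite mulr_sumr; apply: eq_bigr => i _; rewrite /al /aa mpeval_subst; ring.
  have QG : \sum_j be j * mpeval (bb j) Z * (mpeval (bb j) Z)^* =
    lc * (\sum_(h <- hpG) mpeval h Z * (mpeval h Z)^*
          - \sum_(h <- hmG) mpeval h Z * (mpeval h Z)^*).
    rewrite (sum_hm _ _ (fun h => mpeval h Z * (mpeval h Z)^*)).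
    rewrite mulr_sumr; apply: eq_bigr => j _; rewrite /be /bb; ring.
  rewrite QF QG.
  set qF := (X in lt * X); set qG := (X in lc * X).
  move: e1; rewrite -/qF -/qG => e1.
  transitivity (lt * hnorm b Z * qF - lc * (hnorm b Z * qG)); first by ring.
  by rewrite e1 subrr.
have n0 : (0 < a + b + 1)%N by rewrite addn1.
have Hsesq := combine (Ordinal n0) Hcomb.
have Hal0 : forall i, al i != 0 by move=> i; rewrite mulf_neq0 // sgn_nz.
have Hbe0 : forall j, be j != 0 by move=> j; rewrite mulf_neq0 // sgn_nz.
have IndG' := indep_conv IndG.
have IndF' : forall c : 'I_kF -> R, (forall Z, \sum_i c i * mpeval (aa i) Z = 0) ->
    forall i, c i = 0.
  move=> c Hc; apply: (indep_conv IndF) => W.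
  have := Hc (mxapp (invmx tau) W).
  under eq_bigr => i _ do rewrite /aa mpeval_subst -mxappM mulmxV // mxapp1.
  by [].
have SpanGF := span_lemma Hsesq Hbe0 IndG'.
have SpanFG := span_lemma (fun Z W => esym (Hsesq Z W)) Hal0 IndF'.
have [d Hd] := fchoice SpanGF.
have [e He] := fchoice SpanFG.
have Hideal : forall T q, ideal_comp (in_ideal_gen hG) T q <->
                          ideal_comp (in_ideal_gen hF) (tau *m T) q.
  move=> T q; split.
    move=> [p [Jp Hq]]; case/in_gen_iff: Jp => c Hc.
    exists (gen_comb hF (fun i => mpsum [seq mpscale (d j i) (subst (c j) (invmx tau)) | j <- enum 'I_kG])).
    split; first exact: in_gen_comb.
    apply/mpeqE => Z; rewrite (mpeq_eval Hq) !mpeval_subst gen_comb_eval Hc.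
    set Y := mxapp T Z.
    have EY : mxapp (tau *m T) Z = mxapp tau Y by rewrite mxappM.
    under eq_bigr => j _ do rewrite -[nth [::] hG j]/(bb j) (Hd j Y) mulr_sumr.
    rewrite exchange_big /=; apply: eq_bigr => i _.
    rewrite mpeval_lincomb mulr_suml; apply: eq_bigr => j _.
    rewrite mpeval_subst EY -mxappM mulVmx // mxapp1 /aa mpeval_subst; ring.
  move=> [p [Jp Hq]]; case/in_gen_iff: Jp => c Hc.
  exists (gen_comb hG (fun j => mpsum [seq mpscale (e i j) (subst (c i) tau) | i <- enum 'I_kF])).
  split; first exact: in_gen_comb.
  apply/mpeqE => Z; rewrite (mpeq_eval Hq) !mpeval_subst gen_comb_eval Hc.
  set Y := mxapp T Z.
  have EY : mxapp (tau *m T) Z = mxapp tau Y by rewrite mxappM.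
  rewrite EY.
  under eq_bigr => i _ do rewrite -(mpeval_subst (nth [::] hF i) tau Y) (He i Y) mulr_sumr.
  rewrite exchange_big /=; apply: eq_bigr => j _.
  rewrite mpeval_lincomb mulr_suml; apply: eq_bigr => i _.
  rewrite mpeval_subst; ring.
case: H1 => D1 [NZ1 P1]; case: H2 => D2 [NZ2 P2].
have [T [HT1 HT2 HT3]] := find_T Utau NZ1 NZ2.
have HT1' : \det (tau *m T) != 0.
  by rewrite det_mulmx mulf_neq0 // -unitfE -unitmxE.
move=> m; split => Hm.
  apply/(P2 T HT1 HT2 m); apply/(in_ideal_ext le m (Hideal T)).
  exact/(P1 _ HT1' HT3 m).
apply/(P1 _ HT1' HT3 m); apply/(in_ideal_ext le m (fun q => iff_sym (Hideal T q))).
exact/(P2 T HT1 HT2 m).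
Qed.
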